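(* Let $F\in\Gamma_0(\mathbb{R}_+)$ have a strict minimum at $s=1$ (i.e. $F(s)>0$ for $s\neq1$), let $X$ be a set and $c:X\times X\to[0,+\infty]$ be symmetric with $c(x_1,x_2)=0$ if and only if $x_1=x_2$. Then the induced marginal perspective cost $H(x_1,r_1;x_2,r_2):=H_{c(x_1,x_2)}(r_1,r_2)$ is non-negative, symmetric ($H(x_1,r_1;x_2,r_2)=H(x_2,r_2;x_1,r_1)$), and $H(x_1,r_1;x_2,r_2)=0$ if and only if either $r_1=r_2=0$, or $r_1=r_2$ and $x_1=x_2$.
   Context: $\Gamma_0(\mathbb{R}_+)$ is the set of functions $F:[0,\infty)\to[0,\infty]$ that are convex, lower semicontinuous, with $F(1)=0$. For $F\in\Gamma_0(\mathbb{R}_+)$: $\mathrm{rec}(F)(r)=\lim_{\alpha\to\infty}F(1+\alpha r)/\alpha$, $F'_\infty:=\mathrm{rec}(F)(1)$; the perspective function is $\hat F(r,t)=tF(r/t)$ for $t>0$, $\hat F(r,0)=\mathrm{rec}(F)(r)$. For $c\in[0,\infty)$ the marginal perspective function $H_c:[0,\infty)^2\to[0,\infty]$ is the lower semicontinuous envelope of $\tilde H_c(r_1,r_2)=\inf_{\theta>0}\big[\hat F(\theta,r_1)+\hat F(\theta,r_2)+\theta c\big]$ (for $r_1,r_2>0$ this equals $\inf_{\theta>0}[r_1F(\theta/r_1)+r_2F(\theta/r_2)+\theta c]$), and for $c=+\infty$, $H_\infty(r_1,r_2)=F(0)(r_1+r_2)$. *)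

(* Defs.v *)
From Stdlib Require Import Reals Lra ClassicalEpsilon.
Open Scope R_scope.

(** Extended reals R ∪ {+∞} (only values in [0,+∞] are used). *)
Inductive ER : Type := Fin (x : R) | PInf.

Definition ER_le (a b : ER) : Prop :=
  match a, b with
  | Fin x, Fin y => x <= y
  | _, PInf => True
  | PInf, Fin _ => False
  end.

Definition ER_lt (a b : ER) : Prop :=
  match a, b with
  | Fin x, Fin y => x < y
  | Fin _, PInf => True
  | PInf, _ => False
  end.

Definition ER_plus (a b : ER) : ER :=
  match a, b with
  | Fin x, Fin y => Fin (x + y)
  | _, _ => PInf
  end.

(** Multiplication by a real scalar t >= 0, with the convention 0 * (+∞) = 0. *)
Definition ER_scal (t : R) (a : ER) : ER :=
  match a with
  | Fin x => Fin (t * x)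
  | PInf => if Req_EM_T t 0 then Fin 0 else PInf
  end.

Definition ER_is_glb (P : ER -> Prop) (m : ER) : Prop :=
  (forall v, P v -> ER_le m v) /\
  (forall m', (forall v, P v -> ER_le m' v) -> ER_le m' m).
Definition ER_is_lub (P : ER -> Prop) (m : ER) : Prop :=
  (forall v, P v -> ER_le v m) /\
  (forall m', (forall v, P v -> ER_le v m') -> ER_le m m').
Definition ER_inf (P : ER -> Prop) : ER := epsilon (inhabits PInf) (ER_is_glb P).
Definition ER_sup (P : ER -> Prop) : ER := epsilon (inhabits PInf) (ER_is_lub P).

Definition ER_lim_infty (f : R -> ER) (l : ER) : Prop :=
  match l with
  | Fin L => forall eps, 0 < eps -> exists M, forall a, M < a ->
               exists v, f a = Fin v /\ Rabs (v - L) < eps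
  | PInf => forall K, exists M, forall a, M < a -> ER_lt (Fin K) (f a)
  end.

Definition ER_lim (f : R -> ER) : ER := epsilon (inhabits PInf) (ER_lim_infty f).

Definition convex_Rp (F : R -> ER) : Prop :=
  forall x y l, 0 <= x -> 0 <= y -> 0 <= l <= 1 ->
    ER_le (F (l * x + (1 - l) * y)) (ER_plus (ER_scal l (F x)) (ER_scal (1 - l) (F y))).

Definition lsc_Rp (F : R -> ER) : Prop :=
  forall p, 0 <= p -> forall a, ER_lt (Fin a) (F p) ->
    exists d, 0 < d /\ forall q, 0 <= q -> Rabs (q - p) < d -> ER_lt (Fin a) (F q).

(** Gamma_0(R_+): F : [0,∞) -> [0,∞] convex, lsc, F(1) = 0.
    (F is a total function on R; only its values on [0,∞) matter.) *)
Definition Gamma0 (F : R -> ER) : Prop :=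
  (forall s, 0 <= s -> ER_le (Fin 0) (F s)) /\
  convex_Rp F /\ lsc_Rp F /\ F 1 = Fin 0.

Definition recF (F : R -> ER) (r : R) : ER :=
  ER_lim (fun a => ER_scal (/ a) (F (1 + a * r))).

Definition hatF (F : R -> ER) (r t : R) : ER :=
  if Rlt_dec 0 t then ER_scal t (F (r / t)) else recF F r.

Definition Htilde (F : R -> ER) (c r1 r2 : R) : ER :=
  ER_inf (fun v => exists th, 0 < th /\
            v = ER_plus (ER_plus (hatF F th r1) (hatF F th r2)) (Fin (th * c))).

Definition lsc_Rp2 (h : R -> R -> ER) : Prop :=
  forall p1 p2, 0 <= p1 -> 0 <= p2 -> forall a, ER_lt (Fin a) (h p1 p2) ->
    exists d, 0 < d /\ forall q1 q2, 0 <= q1 -> 0 <= q2 ->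
      Rabs (q1 - p1) < d -> Rabs (q2 - p2) < d -> ER_lt (Fin a) (h q1 q2).

Definition lsc_env (g : R -> R -> ER) (r1 r2 : R) : ER :=
  ER_sup (fun v => exists h : R -> R -> ER, lsc_Rp2 h /\
            (forall q1 q2, 0 <= q1 -> 0 <= q2 -> ER_le (h q1 q2) (g q1 q2)) /\
            v = h r1 r2).

Definition Hmarg (F : R -> ER) (c : ER) (r1 r2 : R) : ER :=
  match c with
  | Fin c0 => lsc_env (Htilde F c0) r1 r2
  | PInf => ER_scal (r1 + r2) (F 0)
  end.

Definition Hcost {X : Type} (F : R -> ER) (c : X -> X -> ER)
  (x1 : X) (r1 : R) (x2 : X) (r2 : R) : ER :=
  Hmarg F (c x1 x2) r1 r2.

(* Main.v *)
Require Import Defs.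
From Stdlib Require Import Reals Lra ClassicalEpsilon Classical FunctionalExtensionality PropExtensionality.
Open Scope R_scope.

Lemma ER_le_PInf x : ER_le x PInf.
Proof. destruct x; exact I. Qed.

Lemma ER_le_refl x : ER_le x x.
Proof. destruct x; simpl; auto; lra. Qed.

Lemma ER_le_trans a b d : ER_le a b -> ER_le b d -> ER_le a d.
Proof. destruct a, b, d; simpl; try tauto; lra. Qed.

Lemma ER_lt_le_trans a b d : ER_lt a b -> ER_le b d -> ER_lt a d.
Proof. destruct a, b, d; simpl; try tauto; lra. Qed.

Lemma ER_le_or_lt a b : ER_le a b \/ ER_lt b a.
Proof. destruct a, b; simpl; auto. destruct (Rle_lt_dec x x0); auto. Qed.

Lemma ER_le_plus a b e1 e2 : ER_le (Fin a) e1 -> ER_le (Fin b) e2 ->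
  ER_le (Fin (a+b)) (ER_plus e1 e2).
Proof. destruct e1, e2; simpl; auto; lra. Qed.

Lemma ER_le_scal q a e : 0 < q -> ER_le (Fin a) e -> ER_le (Fin (q*a)) (ER_scal q e).
Proof.
  intros Hq. destruct e; simpl.
  - intros; apply Rmult_le_compat_l; lra.
  - intros _. destruct (Req_EM_T q 0); [lra|exact I].
Qed.

Lemma ER_le_Fin_mono a b e : b <= a -> ER_le (Fin a) e -> ER_le (Fin b) e.
Proof. destruct e; simpl; auto; lra. Qed.

Lemma ER_le_max a b e : ER_le (Fin a) e -> ER_le (Fin b) e -> ER_le (Fin (Rmax a b)) e.
Proof. intros. unfold Rmax; destruct (Rle_dec a b); auto. Qed.

Lemma ER_pos_ex e : ER_lt (Fin 0) e -> exists p, 0 < p /\ ER_le (Fin p) e.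
Proof.
  destruct e; simpl; intros.
  - exists x; split; lra.
  - exists 1; split; [lra|exact I].
Qed.

Lemma lim_ex_gen (f : R -> ER)
  (Hmono : forall a b, 0 < a -> a <= b -> ER_le (f a) (f b)) :
  exists l, ER_lim_infty f l.
Proof.
  destruct (classic (exists b, 0 < b /\ f b = PInf)) as [[b [Hb Eb]]|Hno].
  - exists PInf. simpl. intros K. exists b. intros a Ha.
    pose proof (Hmono b a Hb (Rlt_le _ _ Ha)) as H. rewrite Eb in H.
    destruct (f a); simpl in *; tauto.
  - assert (Hfin : forall b, 0 < b -> exists y, f b = Fin y).
    { intros b Hb. destruct (f b) eqn:E; eauto. exfalso; apply Hno; eauto. }
    set (E := fun y => exists b, 0 < b /\ f b = Fin y).
    assert (HE : exists y, E y).
    { destruct (Hfin 1 Rlt_0_1) as [y Hy]. exists y, 1. split; auto; lra. }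
    destruct (classic (bound E)) as [Hbd|Hnb].
    + destruct (completeness E Hbd HE) as [L [HLub HLleast]].
      exists (Fin L). simpl. intros eps Heps.
      destruct (classic (exists y, E y /\ L - eps < y)) as [[y [[b [Hb Eb]] Hy]]|Hn].
      * exists b. intros a Ha.
        destruct (Hfin a ltac:(lra)) as [v Ev]. exists v; split; auto.
        pose proof (Hmono b a Hb (Rlt_le _ _ Ha)) as H. rewrite Eb, Ev in H. simpl in H.
        assert (v <= L) by (apply HLub; exists a; split; auto; lra).
        apply Rabs_def1; lra.
      * exfalso.
        assert (is_upper_bound E (L - eps)).
        { intros y Ey. destruct (Rle_dec y (L-eps)); auto. exfalso; apply Hn. exists y; split; auto; lra. }
        specialize (HLleast _ H). lra.
    + exists PInf. simpl. intros K.
      destruct (classic (exists y, E y /\ K < y)) as [[y [[b [Hb Eb]] Hy]]|Hn].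
      * exists b. intros a Ha.
        pose proof (Hmono b a Hb (Rlt_le _ _ Ha)) as H. rewrite Eb in H.
        destruct (f a); simpl in *; auto; lra.
      * exfalso. apply Hnb. exists K. intros y Ey.
        destruct (Rle_dec y K); auto. exfalso; apply Hn; exists y; split; auto; lra.
Qed.

Lemma lim_ge (f : R -> ER) a0 (Ha0 : 0 < a0)
  (Hmono : forall a b, 0 < a -> a <= b -> ER_le (f a) (f b)) l :
  ER_lim_infty f l -> ER_le (f a0) l.
Proof.
  destruct l as [L|]; [|intros; apply ER_le_PInf].
  simpl. intros Hl.
  destruct (f a0) as [y|] eqn:Ey.
  - simpl. destruct (Rle_dec y L) as [|Hn]; auto. exfalso.
    destruct (Hl (y - L) ltac:(lra)) as [M HM].
    set (a := Rmax M a0 + 1).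
    assert (M < a) by (unfold a; pose proof (Rmax_l M a0); lra).
    assert (a0 <= a) by (unfold a; pose proof (Rmax_r M a0); lra).
    destruct (HM a H) as [v [Ev Hv]].
    pose proof (Hmono a0 a Ha0 H0) as Hm. rewrite Ey, Ev in Hm. simpl in Hm.
    pose proof (Rle_abs (v - L)). lra.
  - exfalso.
    destruct (Hl 1 ltac:(lra)) as [M HM].
    set (a := Rmax M a0 + 1).
    assert (M < a) by (unfold a; pose proof (Rmax_l M a0); lra).
    assert (a0 <= a) by (unfold a; pose proof (Rmax_r M a0); lra).
    destruct (HM a H) as [v [Ev Hv]].
    pose proof (Hmono a0 a Ha0 H0) as Hm. rewrite Ey, Ev in Hm. simpl in Hm. auto.
Qed.
Lemma mono_F (F : R -> ER) (Hnn : forall s, 0 <= s -> ER_le (Fin 0) (F s))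
  (Hconv : convex_Rp F) (H1 : F 1 = Fin 0) th (Hth : 0 < th) :
  forall a b, 0 < a -> a <= b ->
    ER_le (ER_scal (/a) (F (1 + a*th))) (ER_scal (/b) (F (1 + b*th))).
Proof.
  intros a b Ha Hab.
  destruct (Req_dec a b) as [<-|Hne]; [apply ER_le_refl|].
  set (l := a / b).
  assert (Hl0 : 0 <= l) by (unfold l; apply Rlt_le, Rdiv_lt_0_compat; lra).
  assert (Hlb : l * b = a) by (unfold l; field; lra).
  assert (Hl1 : l <= 1) by nra.
  pose proof (Hconv (1 + b*th) 1 l ltac:(nra) ltac:(lra) (conj Hl0 Hl1)) as H.
  replace (l * (1 + b * th) + (1 - l) * 1) with (1 + a*th) in H by nra.
  rewrite H1 in H.
  destruct (F (1 + b*th)) as [w|] eqn:Ew.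
  - simpl in H. destruct (F (1 + a*th)) as [u|] eqn:Eu; simpl in *; [|contradiction].
    assert (Hu : u <= a * (/b * w)).
    { rewrite <- Hlb. replace (l * b * (/ b * w)) with (l * w) by (field; lra). lra. }
    apply Rmult_le_reg_l with a; [lra|].
    replace (a * (/a * u)) with u by (field; lra). exact Hu.
  - simpl. destruct (Req_EM_T (/b) 0) as [e|].
    + exfalso. apply (Rinv_neq_0_compat b); lra.
    + apply ER_le_PInf.
Qed.

Lemma rec_ge (F : R -> ER) (Hnn : forall s, 0 <= s -> ER_le (Fin 0) (F s))
  (Hconv : convex_Rp F) (H1 : F 1 = Fin 0) th (Hth : 0 < th) a0 (Ha0 : 0 < a0) :
  ER_le (ER_scal (/a0) (F (1 + a0*th))) (recF F th).
Proof.
  unfold recF, ER_lim.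
  pose proof (mono_F F Hnn Hconv H1 th Hth) as Hm.
  apply (lim_ge (fun a => ER_scal (/ a) (F (1 + a * th))) a0 Ha0 Hm).
  apply epsilon_spec. apply lim_ex_gen. exact Hm.
Qed.

Lemma lowF1 (F : R -> ER) (Hnn : forall s, 0 <= s -> ER_le (Fin 0) (F s))
  (Hconv : convex_Rp F) (H1 : F 1 = Fin 0) d k (Hd : 0 < d < 1) (Hk : 0 < k)
  (Hp : ER_le (Fin (k*d)) (F (1-d))) s (Hs : 0 <= s) :
  ER_le (Fin (k*(1-d-s))) (F s).
Proof.
  destruct (Rlt_dec s (1-d)) as [Hlt|Hge].
  - set (l := d / (1-s)).
    assert (Hle : l * (1-s) = d) by (unfold l; field; lra).
    assert (Hl0 : 0 < l) by (unfold l; apply Rdiv_lt_0_compat; lra).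
    assert (Hl1 : l <= 1) by nra.
    pose proof (Hconv s 1 l Hs ltac:(lra) (conj (Rlt_le _ _ Hl0) Hl1)) as H.
    replace (l * s + (1 - l) * 1) with (1-d) in H by nra.
    rewrite H1 in H.
    pose proof (Hnn s Hs) as Hv.
    destruct (F s) as [v|] eqn:Ev; [|exact I].
    simpl in H. pose proof (ER_le_trans _ _ _ Hp H) as Hpv. simpl in Hpv, Hv |- *.
    assert (H' : k*d*(1-s) <= (l*v + (1-l)*0)*(1-s)) by (apply Rmult_le_compat_r; lra).
    replace ((l*v + (1-l)*0)*(1-s)) with (d*v) in H' by (rewrite <- Hle; ring).
    nra.
  - apply ER_le_Fin_mono with 0; [nra|]. apply Hnn; auto.
Qed.

Lemma lowF2 (F : R -> ER) (Hnn : forall s, 0 <= s -> ER_le (Fin 0) (F s))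
  (Hconv : convex_Rp F) (H1 : F 1 = Fin 0) d k (Hd : 0 < d < 1) (Hk : 0 < k)
  (Hp : ER_le (Fin (k*d)) (F (1+d))) s (Hs : 0 <= s) :
  ER_le (Fin (k*(s-1-d))) (F s).
Proof.
  destruct (Rlt_dec (1+d) s) as [Hlt|Hge].
  - set (l := d / (s-1)).
    assert (Hle : l * (s-1) = d) by (unfold l; field; lra).
    assert (Hl0 : 0 < l) by (unfold l; apply Rdiv_lt_0_compat; lra).
    assert (Hl1 : l <= 1) by nra.
    pose proof (Hconv s 1 l Hs ltac:(lra) (conj (Rlt_le _ _ Hl0) Hl1)) as H.
    replace (l * s + (1 - l) * 1) with (1+d) in H by nra.
    rewrite H1 in H.
    pose proof (Hnn s Hs) as Hv.
    destruct (F s) as [v|] eqn:Ev; [|exact I].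
    simpl in H. pose proof (ER_le_trans _ _ _ Hp H) as Hpv. simpl in Hpv, Hv |- *.
    assert (H' : k*d*(s-1) <= (l*v + (1-l)*0)*(s-1)) by (apply Rmult_le_compat_r; lra).
    replace ((l*v + (1-l)*0)*(s-1)) with (d*v) in H' by (rewrite <- Hle; ring).
    nra.
  - apply ER_le_Fin_mono with 0; [nra|]. apply Hnn; auto.
Qed.

Lemma kex (F : R -> ER)
  (Hstrict : forall s, 0 <= s -> s <> 1 -> ER_lt (Fin 0) (F s)) d (Hd : 0 < d < 1) :
  exists k, 0 < k /\ ER_le (Fin (k*d)) (F (1-d)) /\ ER_le (Fin (k*d)) (F (1+d)).
Proof.
  destruct (ER_pos_ex _ (Hstrict (1-d) ltac:(lra) ltac:(lra))) as [p1 [Hp1 H1]].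
  destruct (ER_pos_ex _ (Hstrict (1+d) ltac:(lra) ltac:(lra))) as [p2 [Hp2 H2]].
  exists (Rmin p1 p2 / d).
  assert (E : Rmin p1 p2 / d * d = Rmin p1 p2) by (field; lra).
  rewrite E. split; [|split].
  - apply Rdiv_lt_0_compat; [|lra]. unfold Rmin; destruct (Rle_dec p1 p2); lra.
  - apply ER_le_Fin_mono with p1; auto. apply Rmin_l.
  - apply ER_le_Fin_mono with p2; auto. apply Rmin_r.
Qed.

Definition Mf d th q := Rmax 0 (Rmax ((1-d)*q - th) (th - (1+d)*q)).

Lemma Mf_ge0 d th q : 0 <= Mf d th q.
Proof. apply Rmax_l. Qed.
Lemma Mf_ge1 d th q : (1-d)*q - th <= Mf d th q.
Proof. unfold Mf. eapply Rle_trans; [apply Rmax_l|apply Rmax_r]. Qed.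
Lemma Mf_ge2 d th q : th - (1+d)*q <= Mf d th q.
Proof. unfold Mf. eapply Rle_trans; [apply Rmax_r|apply Rmax_r]. Qed.

Lemma hatF_low (F : R -> ER) (Hnn : forall s, 0 <= s -> ER_le (Fin 0) (F s))
  (Hconv : convex_Rp F) (H1 : F 1 = Fin 0) d k (Hd : 0 < d < 1) (Hk : 0 < k)
  (Hpm : ER_le (Fin (k*d)) (F (1-d))) (Hpp : ER_le (Fin (k*d)) (F (1+d)))
  th q (Hth : 0 < th) (Hq : 0 <= q) :
  ER_le (Fin (k/2 * Mf d th q)) (hatF F th q).
Proof.
  unfold hatF. destruct (Rlt_dec 0 q) as [Hq'|Hq'].
  - assert (Hs : 0 <= th / q) by (apply Rlt_le, Rdiv_lt_0_compat; lra).
    pose proof (ER_le_scal q _ _ Hq' (Hnn _ Hs)) as B0.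
    pose proof (ER_le_scal q _ _ Hq' (lowF1 F Hnn Hconv H1 d k Hd Hk Hpm _ Hs)) as B1.
    pose proof (ER_le_scal q _ _ Hq' (lowF2 F Hnn Hconv H1 d k Hd Hk Hpp _ Hs)) as B2.
    pose proof (ER_le_max _ _ _ B0 (ER_le_max _ _ _ B1 B2)) as B.
    eapply ER_le_Fin_mono; [|exact B].
    replace (q * (k * (1 - d - th / q))) with (k * ((1-d)*q - th)) by (field; lra).
    replace (q * (k * (th / q - 1 - d))) with (k * (th - (1+d)*q)) by (field; lra).
    rewrite Rmult_0_r. unfold Mf.
    generalize ((1 - d) * q - th) (th - (1 + d) * q). intros A C.
    unfold Rmax; repeat destruct (Rle_dec _ _); nra.
  - assert (q = 0) by lra. subst q.
    pose proof (rec_ge F Hnn Hconv H1 th Hth (2*d/th) ltac:(apply Rdiv_lt_0_compat; lra)) as R.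
    replace (1 + 2*d/th*th) with (1+(2*d)) in R by (field; lra).
    pose proof (ER_le_scal (/(2*d/th)) _ _ ltac:(apply Rinv_0_lt_compat, Rdiv_lt_0_compat; lra)
                 (lowF2 F Hnn Hconv H1 d k Hd Hk Hpp (1+(2*d)) ltac:(lra))) as B.
    pose proof (ER_le_trans _ _ _ B R) as B'.
    eapply ER_le_Fin_mono; [|exact B'].
    replace (/ (2 * d / th) * (k * (1 + 2 * d - 1 - d))) with (k/2*th) by (field; lra).
    apply Rmult_le_compat_l; [lra|]. unfold Mf, Rmax; repeat destruct (Rle_dec _ _); lra.
Qed.

Definition elem (F : R -> ER) c th q1 q2 :=
  ER_plus (ER_plus (hatF F th q1) (hatF F th q2)) (Fin (th*c)).

Lemma elem_low (F : R -> ER) (Hnn : forall s, 0 <= s -> ER_le (Fin 0) (F s))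
  (Hconv : convex_Rp F) (H1 : F 1 = Fin 0) d k (Hd : 0 < d < 1) (Hk : 0 < k)
  (Hpm : ER_le (Fin (k*d)) (F (1-d))) (Hpp : ER_le (Fin (k*d)) (F (1+d)))
  c th q1 q2 (Hth : 0 < th) (Hq1 : 0 <= q1) (Hq2 : 0 <= q2) :
  ER_le (Fin (k/2 * Mf d th q1 + k/2 * Mf d th q2 + th*c)) (elem F c th q1 q2).
Proof.
  unfold elem. apply ER_le_plus; [apply ER_le_plus|apply ER_le_refl];
  apply hatF_low; auto.
Qed.
Lemma Rabs_maj2' x : - x <= Rabs x.
Proof. rewrite <- Rabs_Ropp; apply Rle_abs. Qed.

Lemma glb_ex (P : ER -> Prop) b : (forall v, P v -> ER_le (Fin b) v) -> exists m, ER_is_glb P m.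
Proof.
  intros Hb.
  destruct (classic (exists x, P (Fin x))) as [[x0 Hx0]|Hn].
  - set (E := fun y => P (Fin (- y))).
    assert (Hbd : bound E).
    { exists (-b). intros y Ey. specialize (Hb _ Ey). simpl in Hb. lra. }
    assert (HE : exists y, E y) by (exists (-x0); unfold E; rewrite Ropp_involutive; auto).
    destruct (completeness E Hbd HE) as [m [Hub Hle]].
    exists (Fin (-m)). split.
    + intros [x|] Hx; simpl; auto.
      assert (E (-x)) by (unfold E; rewrite Ropp_involutive; auto).
      specialize (Hub _ H). lra.
    + intros [z|] Hz; simpl.
      * assert (is_upper_bound E (-z)).
        { intros y Ey. specialize (Hz _ Ey). simpl in Hz. lra. }
        specialize (Hle _ H). lra.
      * exact (Hz _ Hx0).
  - exists PInf. split.
    + intros [x|] Hx; simpl; auto. exfalso; eauto.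
    + intros; apply ER_le_PInf.
Qed.

Lemma lub_ex (P : ER -> Prop) : (exists v, P v) -> exists m, ER_is_lub P m.
Proof.
  intros [v0 Hv0].
  destruct (classic (P PInf)) as [HP|HnP].
  - exists PInf. split; [intros; apply ER_le_PInf|].
    intros m' Hm'. specialize (Hm' _ HP). destruct m'; simpl in *; auto.
  - assert (Hfin : forall v, P v -> exists x, v = Fin x).
    { intros [x|] Hv; eauto. contradiction. }
    set (E := fun x => P (Fin x)).
    assert (HE : exists y, E y) by (destruct (Hfin _ Hv0) as [x ->]; exists x; auto).
    destruct (classic (bound E)) as [Hbd|Hnb].
    + destruct (completeness E Hbd HE) as [m [Hub Hle]].
      exists (Fin m). split.
      * intros v Hv. destruct (Hfin _ Hv) as [x ->]. simpl. apply Hub. exact Hv.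
      * intros [z|] Hz; simpl; auto. apply Hle. intros y Ey. exact (Hz _ Ey).
    + exists PInf. split; [intros; apply ER_le_PInf|].
      intros [z|] Hz; simpl; auto. apply Hnb. exists z. intros y Ey. exact (Hz _ Ey).
Qed.

Lemma inf_lb (P : ER -> Prop) b v : (forall w, P w -> ER_le (Fin b) w) -> P v ->
  ER_le (ER_inf P) v.
Proof.
  intros Hb Hv. unfold ER_inf.
  pose proof (epsilon_spec (inhabits PInf) (ER_is_glb P) (glb_ex P b Hb)) as [H _].
  auto.
Qed.

Lemma inf_greatest (P : ER -> Prop) b m : (forall w, P w -> ER_le (Fin b) w) ->
  (forall w, P w -> ER_le m w) -> ER_le m (ER_inf P).
Proof.
  intros Hb Hm. unfold ER_inf.
  pose proof (epsilon_spec (inhabits PInf) (ER_is_glb P) (glb_ex P b Hb)) as [_ H].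
  auto.
Qed.

Lemma sup_ub (P : ER -> Prop) v : P v -> ER_le v (ER_sup P).
Proof.
  intros Hv. unfold ER_sup.
  pose proof (epsilon_spec (inhabits PInf) (ER_is_lub P) (lub_ex P (ex_intro _ v Hv))) as [H _].
  auto.
Qed.

Lemma sup_least (P : ER -> Prop) m : (exists v, P v) -> (forall w, P w -> ER_le w m) ->
  ER_le (ER_sup P) m.
Proof.
  intros Hv Hm. unfold ER_sup.
  pose proof (epsilon_spec (inhabits PInf) (ER_is_lub P) (lub_ex P Hv)) as [_ H].
  auto.
Qed.

Lemma Htilde_ge F c q1 q2 y : (forall th, 0 < th -> ER_le (Fin y) (elem F c th q1 q2)) ->
  ER_le (Fin y) (Htilde F c q1 q2).
Proof.
  intros H. unfold Htilde. apply inf_greatest with y; intros w [th [Hth ->]]; apply H; auto.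
Qed.

Lemma Htilde_le F c q1 q2 y th : (forall th, 0 < th -> ER_le (Fin y) (elem F c th q1 q2)) ->
  0 < th -> ER_le (Htilde F c q1 q2) (elem F c th q1 q2).
Proof.
  intros H Hth. unfold Htilde. apply inf_lb with y.
  - intros w [t [Ht ->]]; apply H; auto.
  - exists th; split; auto.
Qed.

Lemma lsc_lin al be ga : lsc_Rp2 (fun q1 q2 => Fin (al*q1 + be*q2 + ga)).
Proof.
  intros p1 p2 Hp1 Hp2 a Ha. simpl in Ha.
  set (K := Rabs al + Rabs be + 1).
  assert (HK : 0 < K) by (unfold K; pose proof (Rabs_pos al); pose proof (Rabs_pos be); lra).
  exists ((al*p1 + be*p2 + ga - a)/K). split.
  - apply Rdiv_lt_0_compat; lra.
  - intros q1 q2 _ _ H1 H2. simpl.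
    set (d := (al * p1 + be * p2 + ga - a) / K) in *.
    assert (Hd : d * K = al * p1 + be * p2 + ga - a) by (unfold d; field; lra).
    assert (A1 : - (al*(q1-p1)) <= Rabs al * d).
    { eapply Rle_trans; [apply Rabs_maj2'|]. rewrite Rabs_mult.
      apply Rmult_le_compat_l; [apply Rabs_pos|lra]. }
    assert (A2 : - (be*(q2-p2)) <= Rabs be * d).
    { eapply Rle_trans; [apply Rabs_maj2'|]. rewrite Rabs_mult.
      apply Rmult_le_compat_l; [apply Rabs_pos|lra]. }
    assert (0 < d) by (pose proof (Rabs_pos (q1-p1)); lra).
    unfold K in Hd. nra.
Qed.

Lemma env_ge F c al be ga
  (Hb : forall th q1 q2, 0 < th -> 0 <= q1 -> 0 <= q2 ->
        ER_le (Fin (al*q1 + be*q2 + ga)) (elem F c th q1 q2))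
  r1 r2 (Hr1 : 0 <= r1) (Hr2 : 0 <= r2) :
  ER_le (Fin (al*r1 + be*r2 + ga)) (lsc_env (Htilde F c) r1 r2).
Proof.
  unfold lsc_env. apply sup_ub.
  exists (fun q1 q2 => Fin (al*q1 + be*q2 + ga)). split; [apply lsc_lin|split; [|reflexivity]].
  intros q1 q2 Hq1 Hq2. apply Htilde_ge. intros; apply Hb; auto.
Qed.

Lemma env_le F c m
  (H0 : forall th q1 q2, 0 < th -> 0 <= q1 -> 0 <= q2 -> ER_le (Fin 0) (elem F c th q1 q2))
  r1 r2 (Hr1 : 0 <= r1) (Hr2 : 0 <= r2)
  (Hall : forall h : R -> R -> ER, lsc_Rp2 h ->
     (forall q1 q2, 0 <= q1 -> 0 <= q2 -> ER_le (h q1 q2) (Htilde F c q1 q2)) ->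
     ER_le (h r1 r2) m) :
  ER_le (lsc_env (Htilde F c) r1 r2) m.
Proof.
  unfold lsc_env. apply sup_least.
  - exists (Fin (0*r1 + 0*r2 + 0)). exists (fun q1 q2 => Fin (0*q1 + 0*q2 + 0)).
    split; [apply lsc_lin|split; [|reflexivity]].
    intros q1 q2 Hq1 Hq2. apply Htilde_ge. intros th Hth.
    eapply ER_le_Fin_mono; [|apply H0; eauto]. lra.
  - intros w [h [Hh [Hle ->]]]. apply Hall; auto.
Qed.

Lemma ER_plus_comm a b : ER_plus a b = ER_plus b a.
Proof. destruct a, b; simpl; auto. f_equal; ring. Qed.

Lemma Htilde_sym F c q1 q2 : Htilde F c q1 q2 = Htilde F c q2 q1.
Proof.
  unfold Htilde. f_equal. apply functional_extensionality. intro v.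
  apply propositional_extensionality.
  split; intros [th [Hth ->]]; exists th; split; auto; f_equal; apply ER_plus_comm.
Qed.

Lemma env_sym F c r1 r2 : lsc_env (Htilde F c) r1 r2 = lsc_env (Htilde F c) r2 r1.
Proof.
  assert (Hsw : forall a b v0, (fun v => exists h : R -> R -> ER, lsc_Rp2 h /\
            (forall q1 q2, 0 <= q1 -> 0 <= q2 -> ER_le (h q1 q2) (Htilde F c q1 q2)) /\
            v = h a b) v0 -> (fun v => exists h : R -> R -> ER, lsc_Rp2 h /\
            (forall q1 q2, 0 <= q1 -> 0 <= q2 -> ER_le (h q1 q2) (Htilde F c q1 q2)) /\
            v = h b a) v0).
  { intros a b v0 [h [Hl [Hle ->]]]. exists (fun x y => h y x). split; [|split; auto].
    - intros p1 p2 Hp1 Hp2 a' Ha'. destruct (Hl p2 p1 Hp2 Hp1 a' Ha') as [d [Hd Hq]].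
      exists d; split; [exact Hd|]. intros q1 q2 Hq1 Hq2 H1 H2. apply Hq; auto.
    - intros q1 q2 Hq1 Hq2. idtac. rewrite (Htilde_sym F c q1 q2). apply Hle; auto. }
  unfold lsc_env. f_equal. apply functional_extensionality. intro v.
  apply propositional_extensionality. split; apply Hsw.
Qed.

Lemma ER_le_lt a b e : ER_le (Fin a) e -> b < a -> ER_lt (Fin b) e.
Proof. destruct e; simpl; auto; lra. Qed.

Lemma hatF_one F (H1 : F 1 = Fin 0) e : 0 < e -> hatF F e e = Fin (e*0).
Proof.
  intros He. unfold hatF. destruct (Rlt_dec 0 e); [|lra].
  replace (e/e) with 1 by (field; lra). rewrite H1. reflexivity.
Qed.

Lemma env00 F c (Hc : 0 <= c) (H1 : F 1 = Fin 0)
  (H0 : forall th q1 q2, 0 < th -> 0 <= q1 -> 0 <= q2 -> ER_le (Fin 0) (elem F c th q1 q2)) :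
  ER_le (lsc_env (Htilde F c) 0 0) (Fin 0).
Proof.
  apply env_le; try lra; auto. intros h Hl Hle.
  destruct (ER_le_or_lt (h 0 0) (Fin 0)) as [|Hlt]; auto. exfalso.
  destruct (ER_pos_ex _ Hlt) as [a [Ha Hah]].
  destruct (Hl 0 0 ltac:(lra) ltac:(lra) (a/2) (ER_le_lt a (a/2) _ Hah ltac:(lra))) as [d [Hd Hq]].
  set (e := Rmin (d/2) (a/(4*(c+1)))).
  assert (He : 0 < e).
  { unfold e, Rmin. destruct (Rle_dec _ _); [lra|apply Rdiv_lt_0_compat; lra]. }
  assert (He1 : e <= d/2) by apply Rmin_l.
  assert (He2 : e * (4*(c+1)) <= a).
  { assert (e <= a/(4*(c+1))) by apply Rmin_r.
    apply Rmult_le_compat_r with (r := 4*(c+1)) in H; [|lra].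
    replace (a / (4 * (c + 1)) * (4 * (c + 1))) with a in H by (field; lra). exact H. }
  assert (Hab : Rabs (e - 0) < d) by (rewrite Rminus_0_r, Rabs_right; lra).
  pose proof (Hq e e ltac:(lra) ltac:(lra) Hab Hab) as Hlt2.
  pose proof (Hle e e ltac:(lra) ltac:(lra)) as Hle2.
  pose proof (Htilde_le F c e e 0 e (fun th Hth => H0 th e e Hth ltac:(lra) ltac:(lra)) He) as Hle3.
  unfold elem in Hle3. rewrite (hatF_one F H1 e He) in Hle3. simpl in Hle3.
  pose proof (ER_lt_le_trans _ _ _ Hlt2 (ER_le_trans _ _ _ Hle2 Hle3)) as Hf.
  simpl in Hf. nra.
Qed.

Lemma ER_antisym0 x : ER_le (Fin 0) x -> ER_le x (Fin 0) -> x = Fin 0.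
Proof. destruct x; simpl; intros; [f_equal; lra|contradiction]. Qed.

Theorem mainTheorem13 (F : R -> ER) (X : Type) (c : X -> X -> ER)
  (HF : Gamma0 F)
  (Hstrict : forall s, 0 <= s -> s <> 1 -> ER_lt (Fin 0) (F s))
  (Hcnn : forall x1 x2, ER_le (Fin 0) (c x1 x2))
  (Hcsym : forall x1 x2, c x1 x2 = c x2 x1)
  (Hc0 : forall x1 x2, c x1 x2 = Fin 0 <-> x1 = x2) :
  forall (x1 : X) (r1 : R) (x2 : X) (r2 : R), 0 <= r1 -> 0 <= r2 ->
    ER_le (Fin 0) (Hcost F c x1 r1 x2 r2) /\
    Hcost F c x1 r1 x2 r2 = Hcost F c x2 r2 x1 r1 /\
    (Hcost F c x1 r1 x2 r2 = Fin 0 <->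
       (r1 = 0 /\ r2 = 0) \/ (r1 = r2 /\ x1 = x2)).
Proof.
  intros x1 r1 x2 r2 Hr1 Hr2.
  destruct HF as (Hnn & Hconv & Hlsc & H1).
  unfold Hcost, Hmarg. rewrite (Hcsym x2 x1).
  pose proof (Hc0 x1 x2) as Hc. pose proof (Hcnn x1 x2) as Hcn.
  destruct (c x1 x2) as [c0|] eqn:Ec.
  - simpl in Hcn.
    destruct (kex F Hstrict (1/2) ltac:(lra)) as [k [Hk [Hpm Hpp]]].
    assert (H0 : forall th q1 q2, 0 < th -> 0 <= q1 -> 0 <= q2 ->
               ER_le (Fin 0) (elem F c0 th q1 q2)).
    { intros th q1 q2 Hth Hq1 Hq2.
      eapply ER_le_Fin_mono; [|apply (elem_low F Hnn Hconv H1 (1/2) k ltac:(lra) Hk Hpm Hpp); auto].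
      pose proof (Mf_ge0 (1/2) th q1). pose proof (Mf_ge0 (1/2) th q2). nra. }
    assert (Hnonneg : ER_le (Fin 0) (lsc_env (Htilde F c0) r1 r2)).
    { eapply ER_le_Fin_mono; [|apply (env_ge F c0 0 0 0); auto]. lra.
      intros; eapply ER_le_Fin_mono; [|apply H0; auto]. lra. }
    split; [exact Hnonneg|]. split; [apply env_sym|]. split.
    + intro HE. destruct (Req_dec c0 0) as [->|Hc0ne].
      * right. split; [|apply Hc; reflexivity].
        destruct (Rtotal_order r1 r2) as [Hlt|[Heq|Hgt]]; auto; exfalso.
        -- set (d := (r2-r1)/(2*(r1+r2))).
           assert (Hdd : d*(2*(r1+r2)) = r2-r1) by (unfold d; field; lra).
           assert (Hd : 0 < d < 1) by (split; nra).
           destruct (kex F Hstrict d Hd) as [k' [Hk' [Hpm' Hpp']]].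
           pose proof (env_ge F 0 (-(k'/2)*(1+d)) ((k'/2)*(1-d)) 0) as G.
           assert (G' : ER_le (Fin (-(k'/2)*(1+d)*r1 + (k'/2)*(1-d)*r2 + 0))
                              (lsc_env (Htilde F 0) r1 r2)).
           { apply G; auto. intros th q1 q2 Hth Hq1 Hq2.
             eapply ER_le_Fin_mono; [|apply (elem_low F Hnn Hconv H1 d k' Hd Hk' Hpm' Hpp'); auto].
             pose proof (Mf_ge2 d th q1). pose proof (Mf_ge1 d th q2).
             pose proof (Mf_ge0 d th q1). pose proof (Mf_ge0 d th q2).
             assert (k'/2*(th-(1+d)*q1) <= k'/2*Mf d th q1) by (apply Rmult_le_compat_l; lra).
             assert (k'/2*((1-d)*q2-th) <= k'/2*Mf d th q2) by (apply Rmult_le_compat_l; lra).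
             nra. }
           rewrite HE in G'. simpl in G'. nra.
        -- set (d := (r1-r2)/(2*(r1+r2))).
           assert (Hdd : d*(2*(r1+r2)) = r1-r2) by (unfold d; field; lra).
           assert (Hd : 0 < d < 1) by (split; nra).
           destruct (kex F Hstrict d Hd) as [k' [Hk' [Hpm' Hpp']]].
           pose proof (env_ge F 0 ((k'/2)*(1-d)) (-(k'/2)*(1+d)) 0) as G.
           assert (G' : ER_le (Fin ((k'/2)*(1-d)*r1 + -(k'/2)*(1+d)*r2 + 0))
                              (lsc_env (Htilde F 0) r1 r2)).
           { apply G; auto. intros th q1 q2 Hth Hq1 Hq2.
             eapply ER_le_Fin_mono; [|apply (elem_low F Hnn Hconv H1 d k' Hd Hk' Hpm' Hpp'); auto].
             pose proof (Mf_ge1 d th q1). pose proof (Mf_ge2 d th q2).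
             pose proof (Mf_ge0 d th q1). pose proof (Mf_ge0 d th q2).
             assert (k'/2*((1-d)*q1-th) <= k'/2*Mf d th q1) by (apply Rmult_le_compat_l; lra).
             assert (k'/2*(th-(1+d)*q2) <= k'/2*Mf d th q2) by (apply Rmult_le_compat_l; lra).
             nra. }
           rewrite HE in G'. simpl in G'. nra.
      * left. destruct (classic (r1 = 0 /\ r2 = 0)) as [|Hn]; auto. exfalso.
        assert (Hpos : 0 < r1 + r2) by (destruct (Req_dec r1 0); destruct (Req_dec r2 0); try tauto; lra).
        set (m := Rmin (k/2) c0).
        assert (Hm1 : m <= k/2) by apply Rmin_l.
        assert (Hm2 : m <= c0) by apply Rmin_r.
        assert (Hm : 0 < m) by (unfold m, Rmin; destruct (Rle_dec _ _); lra).
        pose proof (env_ge F c0 (m/4) (m/4) 0) as G.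
        assert (G' : ER_le (Fin (m/4*r1 + m/4*r2 + 0)) (lsc_env (Htilde F c0) r1 r2)).
        { apply G; auto. intros th q1 q2 Hth Hq1 Hq2.
          eapply ER_le_Fin_mono; [|apply (elem_low F Hnn Hconv H1 (1/2) k ltac:(lra) Hk Hpm Hpp); auto].
          pose proof (Mf_ge1 (1/2) th q1). pose proof (Mf_ge1 (1/2) th q2).
          pose proof (Mf_ge0 (1/2) th q1). pose proof (Mf_ge0 (1/2) th q2).
          assert (m * Mf (1/2) th q1 <= k/2 * Mf (1/2) th q1) by (apply Rmult_le_compat_r; lra).
          assert (m * Mf (1/2) th q2 <= k/2 * Mf (1/2) th q2) by (apply Rmult_le_compat_r; lra).
          assert (m * th <= th * c0) by nra.
          assert (Mf (1/2) th q1 + Mf (1/2) th q2 + th >= (q1+q2)/4)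
            by (destruct (Rle_dec th ((q1+q2)/4)); lra).
          assert (m * ((q1+q2)/4) <= m * (Mf (1/2) th q1 + Mf (1/2) th q2 + th))
            by (apply Rmult_le_compat_l; lra).
          nra. }
        rewrite HE in G'. simpl in G'. nra.
    + intros [[-> ->]|[-> Hx]].
      * apply ER_antisym0; [exact Hnonneg|]. apply env00; auto.
      * apply Hc in Hx. injection Hx as ->.
        destruct (Req_dec r2 0) as [->|Hr2n].
        -- apply ER_antisym0; [exact Hnonneg|]. apply env00; auto; lra.
        -- apply ER_antisym0; [exact Hnonneg|].
           apply env_le; auto. intros h Hl Hle.
           eapply ER_le_trans; [apply Hle; auto|].
           eapply ER_le_trans; [apply (Htilde_le F 0 r2 r2 0 r2); [intros; apply H0; auto|lra]|].
           unfold elem. rewrite (hatF_one F H1 r2 ltac:(lra)). simpl. lra.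
  - assert (Hx : x1 <> x2) by (intro E; apply Hc in E; discriminate).
    pose proof (Hstrict 0 ltac:(lra) ltac:(lra)) as HF0.
    split; [|split; [rewrite Rplus_comm; reflexivity|split]].
    + destruct (F 0) as [f|]; simpl in *; [nra|].
      destruct (Req_EM_T (r1+r2) 0); simpl; auto; lra.
    + intro HE. left. destruct (F 0) as [f|]; simpl in *.
      * injection HE as HE. assert (r1 + r2 = 0) by nra. lra.
      * destruct (Req_EM_T (r1+r2) 0); [lra|discriminate].
    + intros [[-> ->]|[_ E]]; [|contradiction].
      destruct (F 0) as [f|]; simpl; [f_equal; ring|].
      destruct (Req_EM_T (0+0) 0); [reflexivity|lra].
Qed.
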